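(* Let $n\ge 3$ and let $\mathcal{P}=(V_0,\dots,V_{n-1})$ be an $n$-gon. Then $\mathcal{P}$ is strictly convex if and only if $\mathcal{P}$ is c-strictly monotone, i.e. if and only if $\mathcal{P}$ is locally-ordinary and, writing $(\alpha_0,\dots,\alpha_{n-1})=\arg\mathcal{P}$, there is $k\in\{0,\dots,n-1\}$ with either $\alpha_k<\dots<\alpha_{n-1}<\alpha_0<\dots<\alpha_{k-1}$ or $\alpha_k>\dots>\alpha_{n-1}>\alpha_0>\dots>\alpha_{k-1}$ (for $k=0$ these chains read $\alpha_0<\dots<\alpha_{n-1}$, resp. $\alpha_0>\dots>\alpha_{n-1}$).
   Context: A polygon (or $n$-gon) is any finite sequence $\mathcal{P}=(V_0,\dots,V_{n-1})$ of points of $\mathbb{R}^2$; indices are taken cyclically, $V_n:=V_0$. Its edges are the segments $[V_i,V_{i+1}]=\operatorname{conv}\{V_i,V_{i+1}\}$, $i\in\{0,\dots,n-1\}$, and $\operatorname{conv}\mathcal{P}:=\operatorname{conv}\{V_0,\dots,V_{n-1}\}$. $\mathcal{P}$ is convex if $\bigcup_{i=0}^{n-1}[V_i,V_{i+1}]=\partial\operatorname{conv}\mathcal{P}$. $\mathcal{P}$ is strict if for any three distinct indices $i,j,k$ the points $V_i,V_j,V_k$ are non-collinear; strictly convex means strict and convex. $\mathcal{P}$ is locally-ordinary if $V_i\ne V_{i+1}$ for all $i\in\{0,\dots,n-1\}$. For a nonzero vector $\vec v=(x,y)$ with $r=\sqrt{x^2+y^2}$, $\arg\vec v$ is the unique $\psi\in[0,2\pi)$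 with $x=r\cos\psi$, $y=r\sin\psi$. For a locally-ordinary polygon, $\arg\mathcal{P}:=(\arg(V_1-V_0),\dots,\arg(V_n-V_{n-1}))$. The notions c-increasing / c-decreasing / c-strictly monotone are defined only for locally-ordinary polygons, as in the claim. *)

(* Defs.v *)
From Stdlib Require Import Reals Lra ClassicalEpsilon.
Open Scope R_scope.

Definition point : Type := (R * R)%type.

(* An n-gon (V_0,...,V_{n-1}) is given by P : nat -> point, of which only
   the values P 0, ..., P (n-1) matter; indices are taken cyclically. *)
Definition vtx (n : nat) (P : nat -> point) (i : nat) : point := P (i mod n)%nat.

Fixpoint sumR (m : nat) (f : nat -> R) : R :=
  match m with
  | O => 0
  | S k => sumR k f + f k
  end.

Definition segment (A B : point) (X : point) : Prop :=
  exists t, 0 <= t <= 1 /\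
    fst X = (1 - t) * fst A + t * fst B /\
    snd X = (1 - t) * snd A + t * snd B.

Definition conv_hull (n : nat) (P : nat -> point) (X : point) : Prop :=
  exists lam : nat -> R,
    (forall i, (i < n)%nat -> 0 <= lam i) /\
    sumR n lam = 1 /\
    fst X = sumR n (fun i => lam i * fst (P i)) /\
    snd X = sumR n (fun i => lam i * snd (P i)).

Definition dist2 (X Y : point) : R :=
  (fst X - fst Y) ^ 2 + (snd X - snd Y) ^ 2.

Definition boundary (S : point -> Prop) (X : point) : Prop :=
  forall eps, 0 < eps ->
    (exists Y, S Y /\ dist2 X Y < eps ^ 2) /\
    (exists Y, ~ S Y /\ dist2 X Y < eps ^ 2).

Definition is_convex (n : nat) (P : nat -> point) : Prop :=
  forall X,
    (exists i, (i < n)%nat /\ segment (vtx n P i) (vtx n P (S i)) X)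
    <-> boundary (conv_hull n P) X.

Definition collinear (A B C : point) : Prop :=
  exists a b c, (a <> 0 \/ b <> 0) /\
    a * fst A + b * snd A = c /\
    a * fst B + b * snd B = c /\
    a * fst C + b * snd C = c.

Definition is_strict (n : nat) (P : nat -> point) : Prop :=
  forall i j k, (i < n)%nat -> (j < n)%nat -> (k < n)%nat ->
    i <> j -> j <> k -> i <> k -> ~ collinear (P i) (P j) (P k).

Definition strictly_convex (n : nat) (P : nat -> point) : Prop :=
  is_strict n P /\ is_convex n P.

Definition locally_ordinary (n : nat) (P : nat -> point) : Prop :=
  forall i, (i < n)%nat -> vtx n P i <> vtx n P (S i).

Definition arg (v : point) : R :=
  epsilon (inhabits 0) (fun psi =>
    0 <= psi < 2 * PI /\
    fst v = sqrt (fst v ^ 2 + snd v ^ 2) * cos psi /\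
    snd v = sqrt (fst v ^ 2 + snd v ^ 2) * sin psi).

Definition argP (n : nat) (P : nat -> point) (i : nat) : R :=
  arg (fst (vtx n P (S i)) - fst (vtx n P i), snd (vtx n P (S i)) - snd (vtx n P i)).

Definition c_strictly_monotone (n : nat) (P : nat -> point) : Prop :=
  locally_ordinary n P /\
  exists k, (k < n)%nat /\
    ((forall j, (j + 1 < n)%nat ->
        argP n P ((k + j) mod n) < argP n P ((k + j + 1) mod n)) \/
     (forall j, (j + 1 < n)%nat ->
        argP n P ((k + j) mod n) > argP n P ((k + j + 1) mod n))).

(* Main.v *)
Require Import Defs.
From Stdlib Require Import Reals.
From Stdlib Require Import Lra Lia Psatz ClassicalEpsilon Classical.
Open Scope R_scope.
Set Warnings "-deprecated".


Definition cross (u v : point) : R := fst u * snd v - snd u * fst v.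
Definition vsub (A B : point) : point := (fst A - fst B, snd A - snd B).
Definition vnorm (v : point) : R := sqrt (fst v ^ 2 + snd v ^ 2).

Lemma vnorm_pos v : v <> (0,0) -> 0 < vnorm v.
Proof.
  destruct v as [x y]; simpl; intro H. unfold vnorm; simpl.
  apply sqrt_lt_R0.
  destruct (Req_dec x 0); destruct (Req_dec y 0); subst; try (exfalso; apply H; reflexivity); nra.
Qed.

Lemma vnorm_sq v : vnorm v * vnorm v = fst v ^ 2 + snd v ^ 2.
Proof. unfold vnorm. apply sqrt_sqrt. nra. Qed.

Lemma arg_exists v : v <> (0,0) -> exists psi,
    0 <= psi < 2 * PI /\
    fst v = sqrt (fst v ^ 2 + snd v ^ 2) * cos psi /\
    snd v = sqrt (fst v ^ 2 + snd v ^ 2) * sin psi.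
Proof.
  intro Hv. pose proof (vnorm_pos v Hv) as Hr. pose proof (vnorm_sq v) as Hr2.
  fold (vnorm v). set (r := vnorm v) in *.
  destruct v as [x y]; simpl in *.
  set (c := x / r).
  assert (Hc : -1 <= c <= 1).
  { unfold c. split.
    - apply (Rmult_le_reg_r r); auto. field_simplify; [|lra]. nra.
    - apply (Rmult_le_reg_r r); auto. field_simplify; [|lra]. nra. }
  assert (Hs : sqrt (1 - c²) = Rabs y / r).
  { apply sqrt_lem_1.
    - unfold Rsqr. nra.
    - apply Rmult_le_pos; [apply Rabs_pos | left; apply Rinv_0_lt_compat; auto].
    - unfold c, Rsqr.
      assert (Rabs y * Rabs y = y * y) by (rewrite <- Rabs_mult; apply Rabs_right; nra).
      replace (Rabs y / r * (Rabs y / r)) with ((Rabs y * Rabs y) / (r*r)) by (field; lra).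
      rewrite H. assert (r * r <> 0) by nra. apply (Rmult_eq_reg_r (r*r)); auto.
      field_simplify; [nra|lra|lra]. }
  pose proof (acos_bound c) as Hb. pose proof PI_RGT_0.
  destruct (Rle_dec 0 y) as [Hy|Hy].
  - exists (acos c). split; [lra|]. split.
    + rewrite cos_acos by auto. unfold c. field. lra.
    + rewrite sin_acos by auto. rewrite Hs. rewrite Rabs_right by lra. field; lra.
  - exists (2 * PI - acos c).
    assert (acos c <> 0).
    { intro H0. assert (cos (acos c) = 1) by (rewrite H0; apply cos_0).
      rewrite cos_acos in H1 by auto. unfold c in H1.
      assert (x = r) by (apply (Rmult_eq_reg_r (/r)); [|apply Rinv_neq_0_compat; lra]; rewrite Rinv_r by lra; exact H1).
      rewrite H2 in Hr2. assert (y * y = 0) by nra. nra. }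
    split; [lra|]. split.
    + rewrite cos_minus, cos_2PI, sin_2PI, cos_acos by auto. unfold c. field. lra.
    + rewrite sin_minus, cos_2PI, sin_2PI, sin_acos by auto. rewrite Hs.
      rewrite Rabs_left by lra. field; lra.
Qed.

Lemma arg_spec v : v <> (0,0) ->
  0 <= arg v < 2 * PI /\ fst v = vnorm v * cos (arg v) /\ snd v = vnorm v * sin (arg v).
Proof.
  intro Hv. unfold arg, vnorm.
  apply (epsilon_spec (inhabits 0) (fun psi => 0 <= psi < 2 * PI /\
    fst v = sqrt (fst v ^ 2 + snd v ^ 2) * cos psi /\
    snd v = sqrt (fst v ^ 2 + snd v ^ 2) * sin psi)).
  apply arg_exists; auto.
Qed.

Lemma cross_sin u v : u <> (0,0) -> v <> (0,0) ->
  cross u v = vnorm u * vnorm v * sin (arg v - arg u).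
Proof.
  intros Hu Hv. destruct (arg_spec u Hu) as [_ [H1 H2]]. destruct (arg_spec v Hv) as [_ [H3 H4]].
  unfold cross. rewrite H1, H2, H3, H4, sin_minus. ring.
Qed.

Definition Hp (u : point) : Prop := 0 < snd u \/ (snd u = 0 /\ 0 < fst u).

Lemma Hp_arg u : u <> (0,0) -> (Hp u <-> arg u < PI).
Proof.
  intro Hu. destruct (arg_spec u Hu) as [[Ha1 Ha2] [H1 H2]]. pose proof (vnorm_pos u Hu).
  pose proof PI_RGT_0. unfold Hp. split.
  - intros [Hy|[Hy Hx]].
    + destruct (Rlt_dec (arg u) PI); auto. exfalso.
      assert (sin (arg u) <= 0) by (apply sin_le_0; lra). nra.
    + destruct (Rlt_dec (arg u) PI); auto. exfalso.
      destruct (Req_dec (arg u) PI) as [E|E].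
      * rewrite E, cos_PI in H1. nra.
      * assert (sin (arg u) < 0) by (apply sin_lt_0; lra). nra.
  - intro Hlt. destruct (Req_dec (arg u) 0) as [E|E].
    + right. rewrite E, sin_0 in H2. rewrite E, cos_0 in H1. lra.
    + left. assert (0 < sin (arg u)) by (apply sin_gt_0; lra). nra.
Qed.

Lemma arg_lt_ccw u v : u <> (0,0) -> v <> (0,0) -> 0 < cross u v ->
  (Hp u \/ ~ Hp v) -> arg u < arg v.
Proof.
  intros Hu Hv Hc Hh.
  pose proof (Hp_arg u Hu) as Eu. pose proof (Hp_arg v Hv) as Ev.
  destruct (arg_spec u Hu) as [[Ha1 Ha2] _]. destruct (arg_spec v Hv) as [[Hb1 Hb2] _].
  rewrite cross_sin in Hc by auto. pose proof (vnorm_pos u Hu). pose proof (vnorm_pos v Hv).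
  assert (Hs : 0 < sin (arg v - arg u)).
  { assert (0 < vnorm u * vnorm v) by nra.
    destruct (Rlt_dec 0 (sin (arg v - arg u))); auto. nra. }
  destruct (Rlt_dec (arg u) (arg v)) as [|Hn]; auto. exfalso.
  destruct Hh as [Hh|Hh].
  - apply Eu in Hh.
    destruct (Req_dec (arg u) (arg v)) as [E|E].
    + rewrite E, Rminus_diag, sin_0 in Hs. lra.
    + assert (sin (arg v - arg u) < 0) by (apply sin_lt_0_var; lra). lra.
  - assert (~ arg v < PI) by (intro; apply Hh; apply Ev; auto).
    destruct (Req_dec (arg u) (arg v)) as [E|E].
    + rewrite E, Rminus_diag, sin_0 in Hs. lra.
    + assert (sin (arg v - arg u) < 0) by (apply sin_lt_0_var; lra). lra.
Qed.

Lemma arg_gt_cw u v : u <> (0,0) -> v <> (0,0) -> cross u v < 0 ->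
  (~ Hp u \/ Hp v) -> arg v < arg u.
Proof.
  intros Hu Hv Hc Hh.
  pose proof (Hp_arg u Hu) as Eu. pose proof (Hp_arg v Hv) as Ev.
  destruct (arg_spec u Hu) as [[Ha1 Ha2] _]. destruct (arg_spec v Hv) as [[Hb1 Hb2] _].
  rewrite cross_sin in Hc by auto. pose proof (vnorm_pos u Hu). pose proof (vnorm_pos v Hv).
  assert (Hs : sin (arg v - arg u) < 0).
  { assert (0 < vnorm u * vnorm v) by nra.
    destruct (Rlt_dec (sin (arg v - arg u)) 0); auto. nra. }
  destruct (Rlt_dec (arg v) (arg u)) as [|Hn]; auto. exfalso.
  destruct Hh as [Hh|Hh].
  - assert (~ arg u < PI) by (intro; apply Hh; apply Eu; auto).
    destruct (Req_dec (arg u) (arg v)) as [E|E].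
    + rewrite E, Rminus_diag, sin_0 in Hs. lra.
    + assert (0 < sin (arg v - arg u)) by (apply sin_gt_0; lra). lra.
  - apply Ev in Hh.
    destruct (Req_dec (arg u) (arg v)) as [E|E].
    + rewrite E, Rminus_diag, sin_0 in Hs. lra.
    + assert (0 < sin (arg v - arg u)) by (apply sin_gt_0; lra). lra.
Qed.


Lemma mod_addc n a b c : (n <> 0)%nat -> (a mod n = b mod n)%nat -> ((a + c) mod n = (b + c) mod n)%nat.
Proof. intros Hn H. rewrite (Nat.Div0.add_mod a), (Nat.Div0.add_mod b). rewrite H. reflexivity. Qed.

Lemma mod_add_small n x m : (0 < m < n)%nat -> ((x + m) mod n <> x mod n)%nat.
Proof.
  intros Hm E. assert (Hn : n <> 0%nat) by lia.
  rewrite Nat.Div0.add_mod in E. rewrite (Nat.mod_small m) in E by lia.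
  pose proof (Nat.mod_upper_bound x n Hn).
  destruct (Nat.lt_ge_cases (x mod n + m) n).
  - rewrite Nat.mod_small in E by lia. lia.
  - replace (x mod n + m)%nat with ((x mod n + m - n) + 1 * n)%nat in E by lia.
    rewrite Nat.Div0.mod_add, Nat.mod_small in E by lia. lia.
Qed.

Lemma exists_offset n k i : (n <> 0)%nat -> exists p, (p < n)%nat /\ ((k + p) mod n = i mod n)%nat.
Proof.
  intro Hn. pose proof (Nat.mod_upper_bound k n Hn). pose proof (Nat.mod_upper_bound i n Hn).
  pose proof (Nat.div_mod_eq k n) as Ek.
  destruct (Nat.le_gt_cases (k mod n) (i mod n)).
  - exists (i mod n - k mod n)%nat. split; [lia|].
    replace (k + (i mod n - k mod n))%nat with (i mod n + (k / n) * n)%nat by lia.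
    rewrite Nat.Div0.mod_add. apply Nat.mod_mod; auto.
  - exists (n + i mod n - k mod n)%nat. split; [lia|].
    replace (k + (n + i mod n - k mod n))%nat with (i mod n + (k / n + 1) * n)%nat by lia.
    rewrite Nat.Div0.mod_add. apply Nat.mod_mod; auto.
Qed.

Lemma vtx_mod n P i : (n <> 0)%nat -> vtx n P (i mod n) = vtx n P i.
Proof. intro. unfold vtx. rewrite Nat.mod_mod; auto. Qed.

Lemma vtx_cong n P i j : (n <> 0)%nat -> (i mod n = j mod n)%nat -> vtx n P i = vtx n P j.
Proof. intros. unfold vtx. rewrite H0. reflexivity. Qed.

Lemma vtx_lt n P i : (i < n)%nat -> vtx n P i = P i.
Proof. intro. unfold vtx. rewrite Nat.mod_small; auto. Qed.

Lemma vtx_add_n n P i : (n <> 0)%nat -> vtx n P (i + n) = vtx n P i.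
Proof. intro. apply vtx_cong; auto. replace (i + n)%nat with (i + 1 * n)%nat by lia. apply Nat.Div0.mod_add. Qed.

Lemma sumR_ext m f g : (forall i, (i < m)%nat -> f i = g i) -> sumR m f = sumR m g.
Proof. induction m; simpl; intros; auto. rewrite IHm by (intros; apply H; lia). rewrite H by lia. auto. Qed.

Lemma sumR_plus m f g : sumR m (fun i => f i + g i) = sumR m f + sumR m g.
Proof. induction m; simpl; [lra|]. rewrite IHm. lra. Qed.

Lemma sumR_scale m c f : sumR m (fun i => c * f i) = c * sumR m f.
Proof. induction m; simpl; [lra|]. rewrite IHm. lra. Qed.

Lemma sumR_const0 m : sumR m (fun _ => 0) = 0.
Proof. induction m; simpl; [lra|]. rewrite IHm. lra. Qed.

Lemma sumR_nonneg m f : (forall i, (i < m)%nat -> 0 <= f i) -> 0 <= sumR m f.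
Proof. induction m; simpl; intros; [lra|]. pose proof (H m ltac:(lia)). pose proof (IHm ltac:(intros; apply H; lia)). lra. Qed.

Lemma sumR_pos m f : (0 < m)%nat -> (forall i, (i < m)%nat -> 0 < f i) -> 0 < sumR m f.
Proof.
  induction m; simpl; intros; [lia|]. pose proof (H0 m ltac:(lia)).
  destruct m. simpl. lra. pose proof (IHm ltac:(lia) ltac:(intros; apply H0; lia)). lra.
Qed.

Lemma sumR_neg m f : (0 < m)%nat -> (forall i, (i < m)%nat -> f i < 0) -> sumR m f < 0.
Proof.
  induction m; simpl; intros; [lia|]. pose proof (H0 m ltac:(lia)).
  destruct m. simpl. lra. pose proof (IHm ltac:(lia) ltac:(intros; apply H0; lia)). lra.
Qed.

Lemma sumR_split a b f : sumR (a + b) f = sumR a f + sumR b (fun i => f (a + i)%nat).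
Proof. induction b; simpl. rewrite Nat.add_0_r. lra. rewrite Nat.add_succ_r. simpl. rewrite IHb. lra. Qed.

Definition ind (a i : nat) : R := if Nat.eqb i a then 1 else 0.

Lemma sumR_ind m a h : (a < m)%nat -> sumR m (fun i => ind a i * h i) = h a.
Proof.
  induction m; intros; [lia|]. simpl.
  destruct (Nat.eq_dec a m).
  - subst. rewrite (sumR_ext m _ (fun _ => 0)).
    + rewrite sumR_const0. unfold ind. rewrite Nat.eqb_refl. lra.
    + intros. unfold ind. destruct (Nat.eqb_spec i m); [lia|lra].
  - rewrite IHm by lia. unfold ind. destruct (Nat.eqb_spec m a); [lia|lra].
Qed.

Lemma comb3 n P a b c wa wb wc X : (a < n)%nat -> (b < n)%nat -> (c < n)%nat ->
  0 <= wa -> 0 <= wb -> 0 <= wc -> wa + wb + wc = 1 ->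
  fst X = wa * fst (P a) + wb * fst (P b) + wc * fst (P c) ->
  snd X = wa * snd (P a) + wb * snd (P b) + wc * snd (P c) ->
  conv_hull n P X.
Proof.
  intros Ha Hb Hc H1 H2 H3 Hs Hx Hy.
  exists (fun i => wa * ind a i + wb * ind b i + wc * ind c i). split; [|split; [|split]].
  - intros. unfold ind. repeat match goal with |- context [Nat.eqb ?x ?y] => destruct (Nat.eqb x y) end; lra.
  - assert (forall h, sumR n (fun i => (wa * ind a i + wb * ind b i + wc * ind c i) * h i)
                     = wa * h a + wb * h b + wc * h c).
    { intro h. rewrite (sumR_ext n _ (fun i => (wa * (ind a i * h i) + wb * (ind b i * h i)) + wc * (ind c i * h i)))
        by (intros; ring).
      rewrite !sumR_plus, !sumR_scale, !sumR_ind by auto. ring. }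
    pose proof (H (fun _ => 1)). simpl in H0.
    rewrite (sumR_ext n _ (fun i => (wa * ind a i + wb * ind b i + wc * ind c i) * 1)) by (intros; ring).
    lra.
  - assert (forall h, sumR n (fun i => (wa * ind a i + wb * ind b i + wc * ind c i) * h i)
                     = wa * h a + wb * h b + wc * h c).
    { intro h. rewrite (sumR_ext n _ (fun i => (wa * (ind a i * h i) + wb * (ind b i * h i)) + wc * (ind c i * h i)))
        by (intros; ring).
      rewrite !sumR_plus, !sumR_scale, !sumR_ind by auto. ring. }
    rewrite (H (fun i => fst (P i))). auto.
  - assert (forall h, sumR n (fun i => (wa * ind a i + wb * ind b i + wc * ind c i) * h i)
                     = wa * h a + wb * h b + wc * h c).
    { intro h. rewrite (sumR_ext n _ (fun i => (wa * (ind a i * h i) + wb * (ind b i * h i)) + wc * (ind c i * h i)))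
        by (intros; ring).
      rewrite !sumR_plus, !sumR_scale, !sumR_ind by auto. ring. }
    rewrite (H (fun i => snd (P i))). auto.
Qed.

Lemma hull_affine n P X al be ga : conv_hull n P X ->
  (forall i, (i < n)%nat -> 0 <= al * fst (P i) + be * snd (P i) + ga) ->
  0 <= al * fst X + be * snd X + ga.
Proof.
  intros [lam [Hl [Hs [Hx Hy]]]] Hv.
  assert (al * fst X + be * snd X + ga = sumR n (fun i => lam i * (al * fst (P i) + be * snd (P i) + ga))).
  { rewrite (sumR_ext n _ (fun i => (al * (lam i * fst (P i)) + be * (lam i * snd (P i))) + ga * lam i))
      by (intros; ring).
    rewrite !sumR_plus, !sumR_scale. rewrite Hs, Hx, Hy. ring. }
  rewrite H. apply sumR_nonneg. intros. apply Rmult_le_pos; auto.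
Qed.


Definition E n P i := vsub (vtx n P (S i)) (vtx n P i).

Definition CP n P (s : R) : Prop := (s = 1 \/ s = -1) /\
  forall i j, (j mod n <> i mod n)%nat -> (j mod n <> (S i) mod n)%nat ->
    0 < s * cross (E n P i) (vsub (vtx n P j) (vtx n P i)).

Lemma cong_S n a b : (n <> 0)%nat -> (a mod n = b mod n)%nat -> ((S a) mod n = (S b) mod n)%nat.
Proof. intros. replace (S a) with (a + 1)%nat by lia. replace (S b) with (b + 1)%nat by lia. apply mod_addc; auto. Qed.

Lemma mod_S_neq n i : (3 <= n)%nat -> ((S i) mod n <> i mod n)%nat.
Proof. intros. replace (S i) with (i + 1)%nat by lia. apply mod_add_small. lia. Qed.

Lemma mod_SS_neq0 n i : (3 <= n)%nat -> ((S (S i)) mod n <> i mod n)%nat.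
Proof. intros. replace (S (S i)) with (i + 2)%nat by lia. apply mod_add_small. lia. Qed.

Lemma mod_SS_neq1 n i : (3 <= n)%nat -> ((S (S i)) mod n <> (S i) mod n)%nat.
Proof. intros. apply mod_S_neq; auto. Qed.

Lemma E_cong n P i j : (n <> 0)%nat -> (i mod n = j mod n)%nat -> E n P i = E n P j.
Proof. intros. unfold E. rewrite (vtx_cong n P i j), (vtx_cong n P (S i) (S j)); auto. apply cong_S; auto. Qed.

Lemma cross_self u : cross u u = 0.
Proof. unfold cross. ring. Qed.

Lemma vsub_self A : vsub A A = (0,0).
Proof. unfold vsub. f_equal; ring. Qed.

Lemma cross_0 u : cross u (0,0) = 0.
Proof. unfold cross. simpl. ring. Qed.

Lemma CP_E_nz n P s i : (3 <= n)%nat -> CP n P s -> E n P i <> (0,0).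
Proof.
  intros Hn [_ H] HE. pose proof (H i (S (S i)) (mod_SS_neq0 n i Hn) (mod_SS_neq1 n i Hn)).
  rewrite HE in H0. unfold cross in H0. simpl in H0. lra.
Qed.

Lemma CP_turn n P s i : (3 <= n)%nat -> CP n P s -> 0 < s * cross (E n P i) (E n P (S i)).
Proof.
  intros Hn [Hs H]. pose proof (H i (S (S i)) (mod_SS_neq0 n i Hn) (mod_SS_neq1 n i Hn)).
  replace (cross (E n P i) (E n P (S i))) with (cross (E n P i) (vsub (vtx n P (S (S i))) (vtx n P i))); auto.
  unfold cross, E, vsub; simpl. ring.
Qed.

Lemma CP_vtx_neq n P s i j : (3 <= n)%nat -> CP n P s -> (i mod n <> j mod n)%nat -> vtx n P i <> vtx n P j.
Proof.
  intros Hn [Hs H] Hij Heq.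
  destruct (Nat.eq_dec (j mod n) ((S i) mod n)) as [e|e].
  - assert (Hx : (i mod n <> (S j) mod n)%nat).
    { rewrite (cong_S n j (S i)) by (auto; lia). intro. apply (mod_SS_neq0 n i Hn). auto. }
    pose proof (H j i Hij Hx). rewrite Heq, vsub_self, cross_0 in H0. lra.
  - pose proof (H i j (fun h => Hij (eq_sym h)) e). rewrite Heq, vsub_self, cross_0 in H0. lra.
Qed.

Lemma middle n P s m x y a b c : (3 <= n)%nat -> CP n P s ->
  (x mod n <> m mod n)%nat -> (y mod n <> m mod n)%nat -> (x mod n <> y mod n)%nat ->
  (a <> 0 \/ b <> 0) ->
  a * fst (vtx n P m) + b * snd (vtx n P m) = c ->
  a * fst (vtx n P x) + b * snd (vtx n P x) = c ->
  a * fst (vtx n P y) + b * snd (vtx n P y) = c ->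
  ((-b * fst (vtx n P x) + a * snd (vtx n P x)) - (-b * fst (vtx n P m) + a * snd (vtx n P m))) *
  ((-b * fst (vtx n P y) + a * snd (vtx n P y)) - (-b * fst (vtx n P m) + a * snd (vtx n P m))) < 0 -> False.
Proof.
  intros Hn HCP Hxm Hym Hxy Hab Hm Hx Hy Hprod.
  destruct HCP as [Hs H].
  set (M := vtx n P m) in *. set (X := vtx n P x) in *. set (Y := vtx n P y) in *.
  set (u := E n P m).
  set (K := a * fst u + b * snd u).
  set (tx := (-b * fst X + a * snd X) - (-b * fst M + a * snd M)) in *.
  set (ty := (-b * fst Y + a * snd Y) - (-b * fst M + a * snd M)) in *.
  assert (Hq : 0 < a^2 + b^2) by (destruct Hab; nra).
  assert (Gx : (a^2+b^2) * cross u (vsub X M) = tx * K).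
  { assert (e : (a^2+b^2) * cross u (vsub X M) - tx * K = (a*(fst X - fst M) + b*(snd X - snd M))*(b*fst u - a*snd u))
      by (unfold cross, vsub, tx, K; simpl; ring).
    assert (a*(fst X - fst M) + b*(snd X - snd M) = 0) by lra. rewrite H0 in e. lra. }
  assert (Gy : (a^2+b^2) * cross u (vsub Y M) = ty * K).
  { assert (e : (a^2+b^2) * cross u (vsub Y M) - ty * K = (a*(fst Y - fst M) + b*(snd Y - snd M))*(b*fst u - a*snd u))
      by (unfold cross, vsub, ty, K; simpl; ring).
    assert (a*(fst Y - fst M) + b*(snd Y - snd M) = 0) by lra. rewrite H0 in e. lra. }
  assert (Htx : tx <> 0) by (intro E0; rewrite E0 in Hprod; lra).
  assert (Hty : ty <> 0) by (intro E0; rewrite E0 in Hprod; lra).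
  destruct (Nat.eq_dec (x mod n) ((S m) mod n)) as [ex|ex].
  - assert (X = vtx n P (S m)) by (apply vtx_cong; auto; lia).
    assert (cross u (vsub X M) = 0) by (rewrite H0; unfold u, E; apply cross_self).
    rewrite H1 in Gx. assert (K = 0) by (apply (Rmult_eq_reg_l tx); auto; lra).
    rewrite H2 in Gy. assert (cross u (vsub Y M) = 0) by nra.
    assert (Hy1 : (y mod n <> (S m) mod n)%nat) by (rewrite <- ex; auto).
    pose proof (H m y Hym Hy1). fold M Y u in H4. rewrite H3 in H4. lra.
  - destruct (Nat.eq_dec (y mod n) ((S m) mod n)) as [ey|ey].
    + assert (Y = vtx n P (S m)) by (apply vtx_cong; auto; lia).
      assert (cross u (vsub Y M) = 0) by (rewrite H0; unfold u, E; apply cross_self).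
      rewrite H1 in Gy. assert (K = 0) by (apply (Rmult_eq_reg_l ty); auto; lra).
      rewrite H2 in Gx. assert (cross u (vsub X M) = 0) by nra.
      pose proof (H m x Hxm ex). fold M X u in H4. rewrite H3 in H4. lra.
    + pose proof (H m x Hxm ex) as Px. pose proof (H m y Hym ey) as Py. fold M X Y u in Px, Py.
      assert (0 < cross u (vsub X M) * cross u (vsub Y M)) by (destruct Hs; subst s; nra).
      assert ((a^2+b^2)*(a^2+b^2) * (cross u (vsub X M) * cross u (vsub Y M)) = tx * ty * (K*K)).
      { replace ((a^2+b^2)*(a^2+b^2) * (cross u (vsub X M) * cross u (vsub Y M)))
          with (((a^2+b^2) * cross u (vsub X M)) * ((a^2+b^2) * cross u (vsub Y M))) by ring.
        rewrite Gx, Gy. ring. }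
      assert (0 < (a^2+b^2)*(a^2+b^2) * (cross u (vsub X M) * cross u (vsub Y M))).
      { apply Rmult_lt_0_compat; auto. apply Rmult_lt_0_compat; auto. }
      nra.
Qed.



Lemma three_reals t1 t2 t3 : t1 <> t2 -> t2 <> t3 -> t1 <> t3 ->
  (t2 - t1) * (t3 - t1) < 0 \/ (t1 - t2) * (t3 - t2) < 0 \/ (t1 - t3) * (t2 - t3) < 0.
Proof.
  intros.
  destruct (Rlt_dec t1 t2); destruct (Rlt_dec t2 t3); destruct (Rlt_dec t1 t3).
  all: try (right; left; assert (t1 - t2 < 0) by lra; assert (0 < t3 - t2) by lra; nra).
  all: try (right; left; assert (0 < t1 - t2) by lra; assert (t3 - t2 < 0) by lra; nra).
  all: try (left; assert (t2 - t1 < 0) by lra; assert (0 < t3 - t1) by lra; nra).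
  all: try (left; assert (0 < t2 - t1) by lra; assert (t3 - t1 < 0) by lra; nra).
  all: try (right; right; assert (t1 - t3 < 0) by lra; assert (0 < t2 - t3) by lra; nra).
  all: try (right; right; assert (0 < t1 - t3) by lra; assert (t2 - t3 < 0) by lra; nra).
Qed.

Lemma line_t_eq a b c (X Y : point) : (a <> 0 \/ b <> 0) ->
  a * fst X + b * snd X = c -> a * fst Y + b * snd Y = c ->
  -b * fst X + a * snd X = -b * fst Y + a * snd Y -> X = Y.
Proof.
  intros Hab H1 H2 H3. destruct X as [x1 x2], Y as [y1 y2]; simpl in *.
  assert (Hq : 0 < a^2 + b^2) by (destruct Hab; nra).
  assert (e1 : a*(x1-y1) + b*(x2-y2) = 0) by lra.
  assert (e2 : -b*(x1-y1) + a*(x2-y2) = 0) by lra.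
  assert ((a^2+b^2)*(x1 - y1) = 0).
  { replace ((a^2+b^2)*(x1 - y1)) with (a*(a*(x1-y1) + b*(x2-y2)) - b*(-b*(x1-y1) + a*(x2-y2))) by ring.
    rewrite e1, e2. ring. }
  assert ((a^2+b^2)*(x2 - y2) = 0).
  { replace ((a^2+b^2)*(x2 - y2)) with (b*(a*(x1-y1) + b*(x2-y2)) + a*(-b*(x1-y1) + a*(x2-y2))) by ring.
    rewrite e1, e2. ring. }
  apply Rmult_integral in H. apply Rmult_integral in H0.
  destruct H; [lra|]. destruct H0; [lra|]. f_equal; lra.
Qed.

Lemma strict_of_CP n P s : (3 <= n)%nat -> CP n P s -> is_strict n P.
Proof.
  intros Hn HCP i j k Hi Hj Hk Hij Hjk Hik [a [b [c [Hab [H1 [H2 H3]]]]]].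
  rewrite <- (vtx_lt n P i) in H1 by auto. rewrite <- (vtx_lt n P j) in H2 by auto.
  rewrite <- (vtx_lt n P k) in H3 by auto.
  assert (Mi : (i mod n = i)%nat) by (apply Nat.mod_small; auto).
  assert (Mj : (j mod n = j)%nat) by (apply Nat.mod_small; auto).
  assert (Mk : (k mod n = k)%nat) by (apply Nat.mod_small; auto).
  assert (D : forall p q, (p < n)%nat -> (q < n)%nat -> p <> q ->
             a * fst (vtx n P p) + b * snd (vtx n P p) = c ->
             a * fst (vtx n P q) + b * snd (vtx n P q) = c ->
             -b * fst (vtx n P p) + a * snd (vtx n P p) <> -b * fst (vtx n P q) + a * snd (vtx n P q)).
  { intros p q Hp Hq Hpq Ep Eq Et. apply (CP_vtx_neq n P s p q Hn HCP).
    rewrite !Nat.mod_small by auto. auto. eapply line_t_eq; eauto. }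
  destruct (three_reals _ _ _ (D i j Hi Hj Hij H1 H2) (D j k Hj Hk Hjk H2 H3) (D i k Hi Hk Hik H1 H3))
    as [P1|[P1|P1]].
  - apply (middle n P s i j k a b c Hn HCP); rewrite ?Mi, ?Mj, ?Mk; auto.
  - apply (middle n P s j i k a b c Hn HCP); rewrite ?Mi, ?Mj, ?Mk; auto.
  - apply (middle n P s k i j a b c Hn HCP); rewrite ?Mi, ?Mj, ?Mk; auto.
Qed.


Lemma div_nonneg D x : D <> 0 -> 0 <= D * x -> 0 <= x / D.
Proof.
  intros HD H. replace (x / D) with ((D * x) * / (D * D)) by (field; auto).
  apply Rmult_le_pos; auto. left. apply Rinv_0_lt_compat.
  destruct (Rlt_dec 0 D); [nra|]. assert (D < 0) by lra. nra.
Qed.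

Lemma tri_core (A B C X : point) :
  let D := cross (vsub B A) (vsub C A) in D <> 0 ->
  0 <= D * cross (vsub B X) (vsub C X) ->
  0 <= D * cross (vsub C X) (vsub A X) ->
  0 <= D * cross (vsub A X) (vsub B X) ->
  exists wa wb wc, 0 <= wa /\ 0 <= wb /\ 0 <= wc /\ wa + wb + wc = 1 /\
    fst X = wa * fst A + wb * fst B + wc * fst C /\
    snd X = wa * snd A + wb * snd B + wc * snd C.
Proof.
  intros D HD H1 H2 H3.
  exists (cross (vsub B X) (vsub C X) / D), (cross (vsub C X) (vsub A X) / D), (cross (vsub A X) (vsub B X) / D).
  split; [apply div_nonneg; auto|]. split; [apply div_nonneg; auto|]. split; [apply div_nonneg; auto|].
  unfold D in *. destruct A as [a1 a2], B as [b1 b2], C as [c1 c2], X as [x1 x2].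
  unfold cross, vsub in *; simpl in *.
  split; [|split]; field; auto.
Qed.

Lemma tri_hull n P a b c X : (n <> 0)%nat ->
  let A := vtx n P a in let B := vtx n P b in let C := vtx n P c in
  let D := cross (vsub B A) (vsub C A) in D <> 0 ->
  0 <= D * cross (vsub B X) (vsub C X) ->
  0 <= D * cross (vsub C X) (vsub A X) ->
  0 <= D * cross (vsub A X) (vsub B X) -> conv_hull n P X.
Proof.
  intros Hn A B C D HD H1 H2 H3.
  destruct (tri_core A B C X HD H1 H2 H3) as [wa [wb [wc [? [? [? [? [? ?]]]]]]]].
  apply (comb3 n P (a mod n) (b mod n) (c mod n) wa wb wc X); try apply Nat.mod_upper_bound; auto.
Qed.

Lemma seg_hull n P a b t X : (n <> 0)%nat -> 0 <= t <= 1 ->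
  fst X = (1 - t) * fst (vtx n P a) + t * fst (vtx n P b) ->
  snd X = (1 - t) * snd (vtx n P a) + t * snd (vtx n P b) -> conv_hull n P X.
Proof.
  intros Hn Ht H1 H2.
  apply (comb3 n P (a mod n) (b mod n) (a mod n) (1 - t) t 0 X); try apply Nat.mod_upper_bound; auto; try lra.
  - unfold vtx in H1. rewrite H1. ring.
  - unfold vtx in H2. rewrite H2. ring.
Qed.

Lemma hull_H n P s X i : (3 <= n)%nat -> CP n P s -> conv_hull n P X ->
  0 <= s * cross (E n P i) (vsub X (vtx n P i)).
Proof.
  intros Hn HCP HX. pose proof HCP as [Hs H].
  set (al := - s * snd (E n P i)). set (be := s * fst (E n P i)).
  set (ga := s * (snd (E n P i) * fst (vtx n P i) - fst (E n P i) * snd (vtx n P i))).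
  assert (Eq : forall Z, s * cross (E n P i) (vsub Z (vtx n P i)) = al * fst Z + be * snd Z + ga).
  { intro Z. unfold al, be, ga, cross, vsub. simpl. ring. }
  rewrite Eq. apply (hull_affine n P X); auto.
  intros j Hj. rewrite <- Eq. rewrite <- (vtx_lt n P j) by auto.
  destruct (Nat.eq_dec (j mod n) (i mod n)) as [e|e].
  - rewrite (vtx_cong n P j i) by (auto; lia). rewrite vsub_self, cross_0. lra.
  - destruct (Nat.eq_dec (j mod n) ((S i) mod n)) as [e'|e'].
    + rewrite (vtx_cong n P j (S i)) by (auto; lia). fold (E n P i). rewrite cross_self. lra.
    + left. apply H; auto.
Qed.

Lemma inH_all n P s X : (3 <= n)%nat ->
  (forall i, (i < n)%nat -> 0 <= s * cross (E n P i) (vsub X (vtx n P i))) ->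
  forall i, 0 <= s * cross (E n P i) (vsub X (vtx n P i)).
Proof.
  intros Hn H i. rewrite (E_cong n P i (i mod n)) by (try lia; rewrite Nat.mod_mod; lia).
  rewrite <- (vtx_mod n P i) by lia. apply H. apply Nat.mod_upper_bound. lia.
Qed.

Lemma disc_ivt (f : nat -> R) a b : (a < b)%nat -> 0 <= f a -> f b <= 0 ->
  exists k, (a <= k < b)%nat /\ 0 <= f k /\ f (S k) <= 0.
Proof.
  induction b; intros Hab Ha Hb; [lia|].
  destruct (Nat.eq_dec a b).
  - subst. exists b. split; [lia|]. auto.
  - destruct (Rle_dec 0 (f b)).
    + exists b. split; [lia|]. auto.
    + destruct IHb as [k [? [? ?]]]; try lia; auto; try lra.
      exists k. split; [lia|]. auto.
Qed.

Lemma H_hull n P s X : (3 <= n)%nat -> CP n P s ->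
  (forall i, (i < n)%nat -> 0 <= s * cross (E n P i) (vsub X (vtx n P i))) -> conv_hull n P X.
Proof.
  intros Hn HCP H. pose proof (inH_all n P s X Hn H) as Ha. pose proof HCP as [Hs HC].
  set (f := fun k => s * cross (vsub (vtx n P k) (vtx n P 0)) (vsub X (vtx n P 0))).
  assert (F1 : 0 <= f 1%nat) by (apply (Ha 0%nat)).
  assert (Fn : f (n-1)%nat <= 0).
  { pose proof (Ha (n-1)%nat) as h. unfold E in h.
    assert (Hn1 : vtx n P (S (n-1)) = vtx n P 0).
    { replace (S (n-1)) with (0 + n)%nat by lia. apply vtx_add_n. lia. }
    rewrite Hn1 in h. unfold f.
    replace (s * cross (vsub (vtx n P (n - 1)) (vtx n P 0)) (vsub X (vtx n P 0)))
      with (- (s * cross (vsub (vtx n P 0) (vtx n P (n - 1))) (vsub X (vtx n P (n - 1))))).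
    lra. unfold cross, vsub; simpl. ring. }
  destruct (disc_ivt f 1 (n-1) ltac:(lia) F1 Fn) as [k [Hk [Fk FSk]]].
  assert (Hd : 0 < s * cross (vsub (vtx n P k) (vtx n P 0)) (vsub (vtx n P (S k)) (vtx n P 0))).
  { replace (cross (vsub (vtx n P k) (vtx n P 0)) (vsub (vtx n P (S k)) (vtx n P 0)))
      with (cross (E n P k) (vsub (vtx n P 0) (vtx n P k))) by (unfold E, cross, vsub; simpl; ring).
    apply HC; rewrite !Nat.mod_small; lia. }
  apply (tri_hull n P 0 k (S k) X); [lia| | | |].
  - intro h. rewrite h in Hd. lra.
  - pose proof (Ha k) as hk.
    replace (cross (vsub (vtx n P k) X) (vsub (vtx n P (S k)) X)) with (cross (E n P k) (vsub X (vtx n P k)))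
      by (unfold E, cross, vsub; simpl; ring).
    destruct Hs; subst s; nra.
  - unfold f in FSk.
    replace (cross (vsub (vtx n P (S k)) X) (vsub (vtx n P 0) X))
      with (- cross (vsub (vtx n P (S k)) (vtx n P 0)) (vsub X (vtx n P 0)))
      by (unfold cross, vsub; simpl; ring).
    destruct Hs; subst s; nra.
  - unfold f in Fk.
    replace (cross (vsub (vtx n P 0) X) (vsub (vtx n P k) X))
      with (cross (vsub (vtx n P k) (vtx n P 0)) (vsub X (vtx n P 0)))
      by (unfold cross, vsub; simpl; ring).
    destruct Hs; subst s; nra.
Qed.

Lemma dist2_coord (X Y : point) eps : 0 < eps -> dist2 X Y < eps ^ 2 ->
  Rabs (fst X - fst Y) < eps /\ Rabs (snd X - snd Y) < eps.
Proof.
  intros He H. unfold dist2 in H.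
  assert (G : forall x, 0 <= x^2 -> x^2 < eps^2 -> Rabs x < eps).
  { intros x _ Hx. apply Rabs_def1.
    - destruct (Rlt_dec x eps) as [|h]; auto. exfalso. assert (eps <= x) by lra.
      assert (eps * eps <= x * x) by (apply Rmult_le_compat; lra). simpl in Hx. lra.
    - destruct (Rlt_dec (-eps) x) as [|h]; auto. exfalso. assert (x <= -eps) by lra.
      assert (eps * eps <= (-x) * (-x)) by (apply Rmult_le_compat; lra). simpl in Hx. lra. }
  pose proof (pow2_ge_0 (fst X - fst Y)). pose proof (pow2_ge_0 (snd X - snd Y)).
  split; apply G; auto; lra.
Qed.

Lemma near_cross (U M : point) c : 0 < c -> exists eps, 0 < eps /\
  forall Y, dist2 M Y < eps ^ 2 -> Rabs (cross U (vsub M Y)) < c.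
Proof.
  intro Hc. set (K := Rabs (fst U) + Rabs (snd U) + 1).
  assert (HK : 0 < K) by (unfold K; pose proof (Rabs_pos (fst U)); pose proof (Rabs_pos (snd U)); lra).
  exists (c / K). split; [apply Rdiv_lt_0_compat; auto|].
  intros Y HY. destruct (dist2_coord M Y (c/K) ltac:(apply Rdiv_lt_0_compat; auto) HY) as [H1 H2].
  unfold cross, vsub; simpl.
  eapply Rle_lt_trans. apply Rabs_triang. rewrite Rabs_Ropp, !Rabs_mult.
  pose proof (Rabs_pos (fst U)). pose proof (Rabs_pos (snd U)).
  assert (Rabs (fst U) * Rabs (snd M - snd Y) <= Rabs (fst U) * (c / K)) by (apply Rmult_le_compat_l; lra).
  assert (Rabs (snd U) * Rabs (fst M - fst Y) <= Rabs (snd U) * (c / K)) by (apply Rmult_le_compat_l; lra).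
  assert (K * (c / K) = c) by (field; lra).
  assert (0 < c / K) by (apply Rdiv_lt_0_compat; auto).
  assert (Rabs (fst U) * (c / K) + Rabs (snd U) * (c / K) + c / K = K * (c / K)) by (unfold K; ring).
  lra.
Qed.

Lemma unif_eps (Q : nat -> R -> Prop) m :
  (forall i e e', 0 < e' <= e -> Q i e -> Q i e') ->
  (forall i, (i < m)%nat -> exists e, 0 < e /\ Q i e) ->
  exists e, 0 < e /\ forall i, (i < m)%nat -> Q i e.
Proof.
  intros Hmono. induction m; intros H.
  - exists 1. split; [lra|]. intros; lia.
  - destruct IHm as [e1 [He1 Q1]]. { intros. apply H. lia. }
    destruct (H m ltac:(lia)) as [e2 [He2 Q2]].
    exists (Rmin e1 e2). split. { apply Rmin_glb_lt; auto. }
    intros i Hi. destruct (Nat.eq_dec i m).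
    + subst. apply (Hmono m e2). split; [apply Rmin_glb_lt; auto| apply Rmin_r]. auto.
    + apply (Hmono i e1). split; [apply Rmin_glb_lt; auto| apply Rmin_l]. apply Q1. lia.
Qed.

Lemma dist_mono X Y e e' : 0 < e' <= e -> dist2 X Y < e' ^ 2 -> dist2 X Y < e ^ 2.
Proof. intros. nra. Qed.


Lemma cross_shift (U X Y V : point) :
  cross U (vsub Y V) = cross U (vsub X V) - cross U (vsub X Y).
Proof. unfold cross, vsub; simpl; ring. Qed.

Lemma sabs s x : (s = 1 \/ s = -1) -> Rabs (s * x) = Rabs x.
Proof. intros [-> | ->]. rewrite Rmult_1_l; auto. rewrite Rabs_mult. replace (Rabs (-1)) with 1. ring. rewrite Rabs_left by lra. ring. Qed.

Lemma bd_inH n P s X : (3 <= n)%nat -> CP n P s -> boundary (conv_hull n P) X ->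
  forall i, 0 <= s * cross (E n P i) (vsub X (vtx n P i)).
Proof.
  intros Hn HCP HB i. pose proof HCP as [Hs _].
  destruct (Rle_dec 0 (s * cross (E n P i) (vsub X (vtx n P i)))) as [|h]; auto. exfalso.
  set (c := - (s * cross (E n P i) (vsub X (vtx n P i)))).
  destruct (near_cross (E n P i) X c ltac:(unfold c; lra)) as [eps [He Hn']].
  destruct (HB eps He) as [[Y [HY Hd]] _].
  pose proof (hull_H n P s Y i Hn HCP HY) as hy.
  rewrite (cross_shift _ X) in hy. pose proof (Hn' Y Hd) as hb.
  rewrite <- (sabs s) in hb by auto. pose proof (Rabs_def2 _ _ hb). unfold c in *. lra.
Qed.

Lemma bd_edge n P s X : (3 <= n)%nat -> CP n P s -> boundary (conv_hull n P) X ->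
  exists i, (i < n)%nat /\ s * cross (E n P i) (vsub X (vtx n P i)) = 0.
Proof.
  intros Hn HCP HB. pose proof HCP as [Hs _].
  pose proof (bd_inH n P s X Hn HCP HB) as Hin.
  destruct (classic (exists i, (i < n)%nat /\ s * cross (E n P i) (vsub X (vtx n P i)) = 0)) as [|Hno]; auto.
  exfalso.
  assert (Hpos : forall i, (i < n)%nat -> 0 < s * cross (E n P i) (vsub X (vtx n P i))).
  { intros i Hi. destruct (Hin i); auto. exfalso. apply Hno. exists i. auto. }
  destruct (unif_eps (fun i e => forall Y, dist2 X Y < e ^ 2 ->
              Rabs (cross (E n P i) (vsub X Y)) < s * cross (E n P i) (vsub X (vtx n P i))) n)
    as [eps [He HQ]].
  { intros i e e' He' Q Y HY. apply Q. eapply dist_mono; eauto. }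
  { intros i Hi. apply near_cross. auto. }
  destruct (HB eps He) as [_ [Y [HY Hd]]].
  apply HY. apply (H_hull n P s Y Hn HCP). intros i Hi.
  rewrite (cross_shift _ X). pose proof (HQ i Hi Y Hd) as hb.
  rewrite <- (sabs s) in hb by auto. pose proof (Rabs_def2 _ _ hb). lra.
Qed.

Lemma edge_seg n P s X i : (3 <= n)%nat -> CP n P s ->
  (forall j, 0 <= s * cross (E n P j) (vsub X (vtx n P j))) ->
  s * cross (E n P i) (vsub X (vtx n P i)) = 0 ->
  segment (vtx n P i) (vtx n P (S i)) X.
Proof.
  intros Hn HCP Hin H0. pose proof HCP as [Hs _].
  pose proof (CP_E_nz n P s i Hn HCP) as Hnz.
  set (e := E n P i) in *. set (A := vtx n P i) in *.
  assert (Hc : cross e (vsub X A) = 0) by (destruct Hs; subst s; lra).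
  assert (Hq : 0 < fst e ^ 2 + snd e ^ 2).
  { destruct e as [e1 e2]. simpl. destruct (Req_dec e1 0); destruct (Req_dec e2 0); subst; try nra.
    exfalso; auto. }
  set (t := (fst (vsub X A) * fst e + snd (vsub X A) * snd e) / (fst e ^ 2 + snd e ^ 2)).
  assert (Hc' : fst e * (snd X - snd A) - snd e * (fst X - fst A) = 0)  by (rewrite <- Hc; unfold cross, vsub; simpl; ring).
  assert (Wx : fst X = fst A + t * fst e).
  { assert (fst X - fst A - t * fst e = snd e * (- (fst e * (snd X - snd A) - snd e * (fst X - fst A))) / (fst e ^ 2 + snd e ^ 2))
      by (unfold t, vsub; cbn [fst snd]; field; lra).
    rewrite Hc' in H. replace (snd e * - 0 / (fst e ^ 2 + snd e ^ 2)) with 0 in H by (field; lra). lra. }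
  assert (Wy : snd X = snd A + t * snd e).
  { assert (snd X - snd A - t * snd e = fst e * (fst e * (snd X - snd A) - snd e * (fst X - fst A)) / (fst e ^ 2 + snd e ^ 2))
      by (unfold t, vsub; cbn [fst snd]; field; lra).
    rewrite Hc' in H. replace (fst e * 0 / (fst e ^ 2 + snd e ^ 2)) with 0 in H by (field; lra). lra. }
  assert (T1 : t <= 1).
  { pose proof (Hin (S i)) as h. pose proof (CP_turn n P s i Hn HCP) as ht.
    assert (s * cross (E n P (S i)) (vsub X (vtx n P (S i))) = - (t - 1) * (s * cross (E n P i) (E n P (S i)))).
    { unfold E, cross, vsub in *; simpl in *. unfold e, A, E, vsub in Wx, Wy; simpl in Wx, Wy.
      rewrite Wx, Wy. ring. }
    fold e in ht. fold e in H. nra. }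
  assert (T0 : 0 <= t).
  { set (j := (i + n - 1)%nat).
    pose proof (Hin j) as h. pose proof (CP_turn n P s j Hn HCP) as ht.
    assert (Ej : E n P (S j) = e).
    { unfold e. apply E_cong; [lia|]. unfold j. replace (S (i + n - 1)) with (i + 1 * n)%nat by lia.
      apply Nat.Div0.mod_add. }
    assert (Vj : vtx n P (S j) = A).
    { unfold A. apply vtx_cong; [lia|]. unfold j. replace (S (i + n - 1)) with (i + 1 * n)%nat by lia.
      apply Nat.Div0.mod_add. }
    rewrite Ej in ht.
    assert (s * cross (E n P j) (vsub X (vtx n P j)) = t * (s * cross (E n P j) e)).
    { unfold E in *. rewrite Vj in *. unfold cross, vsub in *; simpl in *. rewrite Wx, Wy. ring. }
    nra. }
  exists t. split; [lra|]. split; [rewrite Wx | rewrite Wy]; unfold e, A, E, vsub; cbn [fst snd]; ring.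
Qed.

Lemma seg_bd n P s X i : (3 <= n)%nat -> CP n P s -> (i < n)%nat ->
  segment (vtx n P i) (vtx n P (S i)) X -> boundary (conv_hull n P) X.
Proof.
  intros Hn HCP Hi [t [Ht [Hx Hy]]] eps He. pose proof HCP as [Hs _].
  split.
  - exists X. split.
    + apply (seg_hull n P i (S i) t X); auto. lia.
    + unfold dist2. replace (fst X - fst X) with 0 by ring. replace (snd X - snd X) with 0 by ring.
      simpl. nra.
  - set (e := E n P i). pose proof (CP_E_nz n P s i Hn HCP) as Hnz. fold e in Hnz.
    set (q := fst e ^ 2 + snd e ^ 2).
    assert (Hq : 0 < q).
    { unfold q. destruct e as [e1 e2]. simpl. destruct (Req_dec e1 0); destruct (Req_dec e2 0); subst; try nra.
      exfalso; auto. }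
    set (d := eps / (q + 1)).
    assert (Hd : 0 < d) by (unfold d; apply Rdiv_lt_0_compat; lra).
    exists (fst X + d * s * snd e, snd X - d * s * fst e). split.
    + intro HY. pose proof (hull_H n P s _ i Hn HCP HY) as h. fold e in h.
      assert (s * cross e (vsub (fst X + d * s * snd e, snd X - d * s * fst e) (vtx n P i)) = - d * q * (s * s)).
      { unfold q, e, E, cross, vsub in *; simpl in *. rewrite Hx, Hy. ring. }
      assert (s * s = 1) by (destruct Hs; subst; ring). rewrite H0 in H. nra.
    + unfold dist2. cbn [fst snd].
      assert (d * (q + 1) = eps) by (unfold d; field; lra).
      apply Rle_lt_trans with (d * d * q).
      * right. unfold q. destruct Hs; subst s; ring.
      * rewrite <- H. nra.
Qed.

Lemma convex_of_CP n P s : (3 <= n)%nat -> CP n P s -> is_convex n P.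
Proof.
  intros Hn HCP X. split.
  - intros [i [Hi Hs]]. eapply seg_bd; eauto.
  - intro HB. destruct (bd_edge n P s X Hn HCP HB) as [i [Hi H0]].
    exists i. split; auto. apply (edge_seg n P s X i Hn HCP); auto.
    apply (bd_inH n P s X Hn HCP HB).
Qed.

Lemma sc_of_CP n P s : (3 <= n)%nat -> CP n P s -> strictly_convex n P.
Proof. intros. split. eapply strict_of_CP; eauto. eapply convex_of_CP; eauto. Qed.


Lemma collinear_of_cross0 (A B C : point) : cross (vsub B A) (vsub C A) = 0 -> collinear A B C.
Proof.
  intro H. unfold cross, vsub in H; simpl in H.
  destruct A as [a1 a2], B as [b1 b2], C as [c1 c2]; simpl in *.
  destruct (Req_dec (b1 - a1) 0); destruct (Req_dec (b2 - a2) 0).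
  - destruct (Req_dec (c1 - a1) 0); destruct (Req_dec (c2 - a2) 0).
    + exists 1, 0, a1. simpl. split; [left; lra|]. repeat split; lra.
    + exists (-(c2 - a2)), (c1 - a1), (-(c2-a2)*a1 + (c1-a1)*a2). simpl.
      split; [left; lra|]. repeat split; try ring; nra.
    + exists (-(c2 - a2)), (c1 - a1), (-(c2-a2)*a1 + (c1-a1)*a2). simpl.
      split; [right; lra|]. repeat split; try ring; nra.
    + exists (-(c2 - a2)), (c1 - a1), (-(c2-a2)*a1 + (c1-a1)*a2). simpl.
      split; [right; lra|]. repeat split; try ring; nra.
  - exists (-(b2 - a2)), (b1 - a1), (-(b2-a2)*a1 + (b1-a1)*a2). simpl.
    split; [left; lra|]. repeat split; try ring; nra.
  - exists (-(b2 - a2)), (b1 - a1), (-(b2-a2)*a1 + (b1-a1)*a2). simpl.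
    split; [right; lra|]. repeat split; try ring; nra.
  - exists (-(b2 - a2)), (b1 - a1), (-(b2-a2)*a1 + (b1-a1)*a2). simpl.
    split; [right; lra|]. repeat split; try ring; nra.
Qed.

Lemma strict_cross n P i j : (3 <= n)%nat -> is_strict n P ->
  (j mod n <> i mod n)%nat -> (j mod n <> (S i) mod n)%nat ->
  cross (E n P i) (vsub (vtx n P j) (vtx n P i)) <> 0.
Proof.
  intros Hn Hs H1 H2 H0. apply (Hs (i mod n) ((S i) mod n) (j mod n)); try apply Nat.mod_upper_bound; try lia.
  - intro h. apply (mod_S_neq n i Hn). auto.
  - apply collinear_of_cross0. exact H0.
Qed.

Lemma midpoint_bd n P i : (3 <= n)%nat -> is_convex n P ->
  boundary (conv_hull n P) ((fst (vtx n P i) + fst (vtx n P (S i))) / 2, (snd (vtx n P i) + snd (vtx n P (S i))) / 2).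
Proof.
  intros Hn Hc. apply Hc. exists (i mod n). split; [apply Nat.mod_upper_bound; lia|].
  rewrite (vtx_mod n P i) by lia.
  rewrite (vtx_cong n P (S (i mod n)) (S i)) by (try lia; apply cong_S; try lia; apply Nat.Div0.mod_mod).
  exists (1/2). simpl. split; [lra|]. split; field.
Qed.

Lemma nbhd_contra n P i j k : (3 <= n)%nat -> strictly_convex n P ->
  0 < cross (E n P i) (vsub (vtx n P j) (vtx n P i)) ->
  cross (E n P i) (vsub (vtx n P k) (vtx n P i)) < 0 -> False.
Proof.
  intros Hn [Hs Hc] H1 H2.
  pose proof (midpoint_bd n P i Hn Hc) as HB.
  set (A := vtx n P i) in *. set (B := vtx n P (S i)) in *.
  set (Cj := vtx n P j) in *. set (Dk := vtx n P k) in *.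
  set (M := ((fst A + fst B) / 2, (snd A + snd B) / 2)) in *.
  set (D1 := cross (E n P i) (vsub Cj A)) in *. set (D2 := cross (E n P i) (vsub Dk A)) in *.
  destruct (near_cross (vsub B Cj) M (D1/2) ltac:(lra)) as [e1 [He1 N1]].
  destruct (near_cross (vsub Cj A) M (D1/2) ltac:(lra)) as [e2 [He2 N2]].
  destruct (near_cross (vsub B Dk) M (-D2/2) ltac:(lra)) as [e3 [He3 N3]].
  destruct (near_cross (vsub Dk A) M (-D2/2) ltac:(lra)) as [e4 [He4 N4]].
  set (eps := Rmin (Rmin e1 e2) (Rmin e3 e4)).
  assert (Heps : 0 < eps) by (unfold eps; repeat apply Rmin_glb_lt; auto).
  assert (L1 : eps <= e1) by (unfold eps; eapply Rle_trans; [apply Rmin_l|apply Rmin_l]).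
  assert (L2 : eps <= e2) by (unfold eps; eapply Rle_trans; [apply Rmin_l|apply Rmin_r]).
  assert (L3 : eps <= e3) by (unfold eps; eapply Rle_trans; [apply Rmin_r|apply Rmin_l]).
  assert (L4 : eps <= e4) by (unfold eps; eapply Rle_trans; [apply Rmin_r|apply Rmin_r]).
  destruct (HB eps Heps) as [_ [Y [HY Hd]]].
  pose proof (Rabs_def2 _ _ (N1 Y ltac:(apply (dist_mono M Y e1 eps); [lra|auto]))) as R1.
  pose proof (Rabs_def2 _ _ (N2 Y ltac:(apply (dist_mono M Y e2 eps); [lra|auto]))) as R2.
  pose proof (Rabs_def2 _ _ (N3 Y ltac:(apply (dist_mono M Y e3 eps); [lra|auto]))) as R3.
  pose proof (Rabs_def2 _ _ (N4 Y ltac:(apply (dist_mono M Y e4 eps); [lra|auto]))) as R4.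
  apply HY.
  set (g := cross (vsub B A) (vsub Y A)).
  assert (I1 : cross (vsub B Y) (vsub Cj Y) = D1 / 2 + cross (vsub B Cj) (vsub M Y))
    by (unfold D1, M, E, cross, vsub; fold A B; cbn [fst snd]; field).
  assert (I2 : cross (vsub Cj Y) (vsub A Y) = D1 / 2 + cross (vsub Cj A) (vsub M Y))
    by (unfold D1, M, E, cross, vsub; fold A B; cbn [fst snd]; field).
  assert (I3 : cross (vsub B Y) (vsub Dk Y) = D2 / 2 + cross (vsub B Dk) (vsub M Y))
    by (unfold D2, M, E, cross, vsub; fold A B; cbn [fst snd]; field).
  assert (I4 : cross (vsub Dk Y) (vsub A Y) = D2 / 2 + cross (vsub Dk A) (vsub M Y))
    by (unfold D2, M, E, cross, vsub; fold A B; cbn [fst snd]; field).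
  assert (I5 : cross (vsub A Y) (vsub B Y) = g) by (unfold g, cross, vsub; cbn [fst snd]; ring).
  destruct (Rle_dec 0 g).
  - apply (tri_hull n P i (S i) j Y); [lia| | | |]; fold A B Cj; change (vsub B A) with (E n P i); fold D1.
    + lra.
    + rewrite I1. nra.
    + rewrite I2. nra.
    + rewrite I5. nra.
  - apply (tri_hull n P i (S i) k Y); [lia| | | |]; fold A B Dk; change (vsub B A) with (E n P i); fold D2.
    + lra.
    + rewrite I3. nra.
    + rewrite I4. nra.
    + rewrite I5. nra.
Qed.

Lemma same_side n P i j k : (3 <= n)%nat -> strictly_convex n P ->
  (j mod n <> i mod n)%nat -> (j mod n <> (S i) mod n)%nat ->
  (k mod n <> i mod n)%nat -> (k mod n <> (S i) mod n)%nat ->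
  0 < cross (E n P i) (vsub (vtx n P j) (vtx n P i)) * cross (E n P i) (vsub (vtx n P k) (vtx n P i)).
Proof.
  intros Hn Hsc Hj1 Hj2 Hk1 Hk2.
  pose proof (strict_cross n P i j Hn (proj1 Hsc) Hj1 Hj2).
  pose proof (strict_cross n P i k Hn (proj1 Hsc) Hk1 Hk2).
  set (cj := cross (E n P i) (vsub (vtx n P j) (vtx n P i))) in *.
  set (ck := cross (E n P i) (vsub (vtx n P k) (vtx n P i))) in *.
  destruct (Rlt_dec 0 cj); destruct (Rlt_dec 0 ck).
  - nra.
  - exfalso. apply (nbhd_contra n P i j k Hn Hsc); fold cj ck; lra.
  - exfalso. apply (nbhd_contra n P i k j Hn Hsc); fold cj ck; lra.
  - assert (cj < 0) by lra. assert (ck < 0) by lra. nra.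
Qed.

Lemma CP_of_sc n P : (3 <= n)%nat -> strictly_convex n P -> exists s, CP n P s.
Proof.
  intros Hn Hsc.
  assert (M2 : (2 mod n = 2)%nat) by (apply Nat.mod_small; lia).
  assert (M0 : (0 mod n = 0)%nat) by (apply Nat.mod_small; lia).
  assert (M1 : (1 mod n = 1)%nat) by (apply Nat.mod_small; lia).
  set (c2 := cross (E n P 0) (vsub (vtx n P 2) (vtx n P 0))).
  assert (Hc2 : c2 <> 0) by (apply strict_cross; try apply Hsc; auto; rewrite ?M2, ?M0, ?M1; lia).
  set (s := if Rlt_dec 0 c2 then 1 else -1).
  assert (Hs : s = 1 \/ s = -1) by (unfold s; destruct (Rlt_dec 0 c2); auto).
  assert (Hsc2 : 0 < s * c2) by (unfold s; destruct (Rlt_dec 0 c2); lra).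
  exists s. split; auto.
  intro i. induction i; intros j H1 H2.
  - pose proof (same_side n P 0 j 2 Hn Hsc H1 H2 ltac:(rewrite M2, M0; lia) ltac:(rewrite M2, M1; lia)).
    fold c2 in H. destruct Hs; rewrite H0 in *; nra.
  - assert (Hi1 : (i mod n <> (S i) mod n)%nat) by (intro h; apply (mod_S_neq n i Hn); auto).
    assert (Hi2 : (i mod n <> (S (S i)) mod n)%nat) by (intro h; apply (mod_SS_neq0 n i Hn); auto).
    pose proof (IHi (S (S i)) (mod_SS_neq0 n i Hn) (mod_SS_neq1 n i Hn)) as h.
    replace (cross (E n P i) (vsub (vtx n P (S (S i))) (vtx n P i)))
      with (cross (E n P (S i)) (vsub (vtx n P i) (vtx n P (S i)))) in h by (unfold E, cross, vsub; cbn [fst snd]; ring).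
    pose proof (same_side n P (S i) i j Hn Hsc Hi1 Hi2 H1 H2).
    destruct Hs; rewrite H0 in *; nra.
Qed.


Lemma argP_E n P i : argP n P i = arg (E n P i).
Proof. reflexivity. Qed.

Lemma argP_cong n P i j : (n <> 0)%nat -> (i mod n = j mod n)%nat -> argP n P i = argP n P j.
Proof. intros. rewrite !argP_E. rewrite (E_cong n P i j); auto. Qed.

Lemma mod_S_inj n a b : (n <> 0)%nat -> ((S a) mod n = (S b) mod n)%nat -> (a mod n = b mod n)%nat.
Proof.
  intros Hn H. apply (mod_addc n _ _ (n - 1)) in H; auto.
  replace (S a + (n - 1))%nat with (a + 1 * n)%nat in H by lia.
  replace (S b + (n - 1))%nat with (b + 1 * n)%nat in H by lia.
  rewrite !Nat.Div0.mod_add in H. auto.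
Qed.

Definition tp (s : R) (u v : point) : Prop :=
  (s = 1 /\ ~ Hp u /\ Hp v) \/ (s = -1 /\ Hp u /\ ~ Hp v).

Lemma turn_y (u v w : point) s : tp s u v ->
  0 < s * cross u v -> 0 < s * cross u w -> 0 < s * cross v w -> 0 < s * snd w.
Proof.
  intros Ht H1 H2 H3.
  assert (Id : cross u v * snd w = cross u w * snd v - cross v w * snd u) by (unfold cross; ring).
  destruct u as [u1 u2], v as [v1 v2], w as [w1 w2]. unfold tp, Hp, cross in *; simpl in *.
  destruct Ht as [[-> [Hu Hv]] | [-> [Hu Hv]]].
  - assert (u2 <= 0) by (destruct (Rle_dec u2 0); auto; exfalso; apply Hu; left; lra).
    destruct Hv as [Hv|[Hv1 Hv2]].
    + nra.
    + destruct (Req_dec u2 0).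
      * exfalso. subst. assert (u1 <= 0) by (destruct (Rle_dec u1 0); auto; exfalso; apply Hu; right; split; lra).
        nra.
      * nra.
  - assert (v2 <= 0) by (destruct (Rle_dec v2 0); auto; exfalso; apply Hv; left; lra).
    destruct Hu as [Hu|[Hu1 Hu2]].
    + nra.
    + destruct (Req_dec v2 0).
      * exfalso. subst. assert (v1 <= 0) by (destruct (Rle_dec v1 0); auto; exfalso; apply Hv; right; split; lra).
        nra.
      * nra.
Qed.

Lemma tp_side n P s a j : (3 <= n)%nat -> CP n P s -> tp s (E n P a) (E n P (S a)) ->
  (j mod n <> a mod n)%nat -> (j mod n <> (S a) mod n)%nat -> (j mod n <> (S (S a)) mod n)%nat ->
  0 < s * (snd (vtx n P j) - snd (vtx n P (S a))).
Proof.
  intros Hn HCP Ht H1 H2 H3. pose proof HCP as [Hs HC].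
  replace (snd (vtx n P j) - snd (vtx n P (S a))) with (snd (vsub (vtx n P j) (vtx n P (S a)))) by reflexivity.
  apply (turn_y (E n P a) (E n P (S a))); [exact Ht| | |].
  - apply CP_turn; auto.
  - replace (cross (E n P a) (vsub (vtx n P j) (vtx n P (S a))))
      with (cross (E n P a) (vsub (vtx n P j) (vtx n P a))) by (unfold E, cross, vsub; cbn [fst snd]; ring).
    apply HC; auto.
  - apply HC; auto.
Qed.

Lemma tp_unique n P s a b : (3 <= n)%nat -> CP n P s ->
  tp s (E n P a) (E n P (S a)) -> tp s (E n P b) (E n P (S b)) -> (a mod n = b mod n)%nat.
Proof.
  intros Hn HCP Ha Hb. pose proof HCP as [Hs _].
  destruct (Nat.eq_dec (a mod n) (b mod n)) as [|hne]; auto. exfalso.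
  destruct (Nat.eq_dec (b mod n) ((S a) mod n)) as [e|e].
  - rewrite (E_cong n P b (S a)) in Hb by (auto; lia).
    unfold tp in Ha, Hb. destruct Ha as [[? [? ?]]|[? [? ?]]]; destruct Hb as [[? [? ?]]|[? [? ?]]]; try lra; auto.
  - destruct (Nat.eq_dec (a mod n) ((S b) mod n)) as [e'|e'].
    + rewrite (E_cong n P a (S b)) in Ha by (auto; lia).
      unfold tp in Ha, Hb. destruct Ha as [[? [? ?]]|[? [? ?]]]; destruct Hb as [[? [? ?]]|[? [? ?]]]; try lra; auto.
    + assert (X1 : 0 < s * (snd (vtx n P (S b)) - snd (vtx n P (S a)))).
      { apply tp_side; [lia|exact HCP|exact Ha| | | ].
        - intro h; apply e'; lia.
        - intro h. apply hne. symmetry. apply mod_S_inj; auto. lia.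
        - intro h. apply e. apply mod_S_inj; auto. lia. }
      assert (X2 : 0 < s * (snd (vtx n P (S a)) - snd (vtx n P (S b)))).
      { apply tp_side; [lia|exact HCP|exact Hb| | | ].
        - intro h; apply e; lia.
        - intro h. apply hne. apply mod_S_inj; auto. lia.
        - intro h. apply e'. apply mod_S_inj; auto. lia. }
      lra.
Qed.

Lemma not_asc_tp n P s a : (3 <= n)%nat -> CP n P s ->
  ~ (s * argP n P a < s * argP n P (S a)) -> tp s (E n P a) (E n P (S a)).
Proof.
  intros Hn HCP H. pose proof HCP as [Hs _].
  pose proof (CP_turn n P s a Hn HCP) as Ht.
  pose proof (CP_E_nz n P s a Hn HCP). pose proof (CP_E_nz n P s (S a) Hn HCP).
  rewrite !argP_E in H. unfold tp.
  destruct Hs as [-> | ->].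
  - left. split; auto.
    destruct (classic (Hp (E n P a))); destruct (classic (Hp (E n P (S a)))).
    + exfalso. apply H. rewrite !Rmult_1_l. apply arg_lt_ccw; auto; lra.
    + exfalso. apply H. rewrite !Rmult_1_l. apply arg_lt_ccw; auto; lra.
    + auto.
    + exfalso. apply H. rewrite !Rmult_1_l. apply arg_lt_ccw; auto; lra.
  - right. split; auto.
    destruct (classic (Hp (E n P a))); destruct (classic (Hp (E n P (S a)))).
    + exfalso. apply H. assert (arg (E n P (S a)) < arg (E n P a)) by (apply arg_gt_cw; auto; lra). lra.
    + auto.
    + exfalso. apply H. assert (arg (E n P (S a)) < arg (E n P a)) by (apply arg_gt_cw; auto; lra). lra.
    + exfalso. apply H. assert (arg (E n P (S a)) < arg (E n P a)) by (apply arg_gt_cw; auto; lra). lra.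
Qed.

Lemma descent_exists (f : nat -> R) n : (0 < n)%nat -> f n = f 0%nat -> exists d, (d < n)%nat /\ ~ (f d < f (S d)).
Proof.
  intros Hn Hp. destruct (classic (exists d, (d < n)%nat /\ ~ (f d < f (S d)))) as [|H]; auto. exfalso.
  assert (forall d, (d < n)%nat -> f d < f (S d)).
  { intros d Hd. destruct (Rlt_dec (f d) (f (S d))); auto. exfalso. apply H. exists d. auto. }
  assert (forall m, (1 <= m <= n)%nat -> f 0%nat < f m).
  { induction m; intros; [lia|]. destruct (Nat.eq_dec m 0). subst. apply H0. lia.
    pose proof (IHm ltac:(lia)). pose proof (H0 m ltac:(lia)). lra. }
  pose proof (H1 n ltac:(lia)). lra.
Qed.

Lemma csm_of_CP n P s : (3 <= n)%nat -> CP n P s -> c_strictly_monotone n P.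
Proof.
  intros Hn HCP. pose proof HCP as [Hs _]. split.
  - intros i Hi Heq. apply (CP_E_nz n P s i Hn HCP). unfold E. rewrite Heq. apply vsub_self.
  - destruct (descent_exists (fun i => s * argP n P i) n ltac:(lia)) as [d [Hd Hnd]].
    { simpl. f_equal. apply argP_cong; [lia|]. rewrite Nat.Div0.mod_same. symmetry. apply Nat.mod_small. lia. }
    pose proof (not_asc_tp n P s d Hn HCP Hnd) as Htd.
    exists ((S d) mod n). split; [apply Nat.mod_upper_bound; lia|].
    assert (Key : forall j, (j + 1 < n)%nat ->
               s * argP n P (((S d) mod n + j) mod n) < s * argP n P (((S d) mod n + j + 1) mod n)).
    { intros j Hj.
      rewrite (argP_cong n P (((S d) mod n + j) mod n) ((S d) mod n + j)) by (try lia; apply Nat.Div0.mod_mod).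
      rewrite (argP_cong n P (((S d) mod n + j + 1) mod n) (S ((S d) mod n + j))) by (try lia; rewrite Nat.Div0.mod_mod; f_equal; lia).
      destruct (Rlt_dec (s * argP n P ((S d) mod n + j)) (s * argP n P (S ((S d) mod n + j)))) as [|h]; auto.
      exfalso. pose proof (not_asc_tp n P s _ Hn HCP h) as Ht.
      pose proof (tp_unique n P s _ _ Hn HCP Ht Htd) as Hu.
      rewrite Nat.Div0.add_mod_idemp_l in Hu.
      replace (S d + j)%nat with (d + (j + 1))%nat in Hu by lia.
      apply (mod_add_small n d (j + 1)); auto. lia. }
    destruct Hs as [-> | ->].
    + left. intros j Hj. pose proof (Key j Hj). lra.
    + right. intros j Hj. pose proof (Key j Hj). lra.
Qed.


Lemma sin_shift x : sin (x + 2 * PI) = sin x.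
Proof. rewrite sin_plus, sin_2PI, cos_2PI. ring. Qed.

Lemma sin_order b1 b2 : 0 < b1 -> b1 < b2 -> b2 < 2 * PI -> sin b1 <= 0 -> sin b2 < 0.
Proof.
  intros H1 H2 H3 H4. pose proof PI_RGT_0.
  destruct (Rlt_dec b1 PI).
  - assert (0 < sin b1) by (apply sin_gt_0; lra). lra.
  - apply sin_lt_0; lra.
Qed.

Lemma Qlem (A : nat -> R) n p m1 m2 :
  (forall q, A (q + n)%nat = A q) ->
  (forall q1 q2, (q1 < q2 < n)%nat -> A q1 < A q2) ->
  (forall q q', (q < n)%nat -> (q' < n)%nat -> A q - A q' < 2 * PI) ->
  (p < n)%nat -> (1 <= m1)%nat -> (m1 < m2)%nat -> (m2 <= n - 1)%nat ->
  sin (A (p + m1)%nat - A p) <= 0 -> sin (A (p + m2)%nat - A p) < 0.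
Proof.
  intros Hper Hmono Hb Hp H1 H12 H2 Hs.
  destruct (Nat.lt_ge_cases (p + m2) n) as [c2|c2].
  - pose proof (Hmono p (p+m1)%nat ltac:(lia)). pose proof (Hmono (p+m1)%nat (p+m2)%nat ltac:(lia)).
    pose proof (Hb (p+m2)%nat p ltac:(lia) ltac:(lia)).
    apply (sin_order (A (p + m1)%nat - A p)); lra.
  - assert (e2 : A (p + m2)%nat = A (p + m2 - n)%nat) by (rewrite <- (Hper (p + m2 - n)%nat); f_equal; lia).
    rewrite e2, <- sin_shift.
    replace (A (p + m2 - n)%nat - A p + 2 * PI) with (A (p + m2 - n)%nat + 2 * PI - A p) by ring.
    pose proof (Hmono (p + m2 - n)%nat p ltac:(lia)).
    pose proof (Hb p (p + m2 - n)%nat ltac:(lia) ltac:(lia)).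
    destruct (Nat.lt_ge_cases (p + m1) n) as [c1|c1].
    + pose proof (Hmono p (p+m1)%nat ltac:(lia)).
      pose proof (Hb (p+m1)%nat (p + m2 - n)%nat ltac:(lia) ltac:(lia)).
      apply (sin_order (A (p + m1)%nat - A p)); lra.
    + assert (e1 : A (p + m1)%nat = A (p + m1 - n)%nat).
      { rewrite <- (Hper (p + m1 - n)%nat). f_equal. lia. }
      rewrite e1 in Hs.
      rewrite <- sin_shift in Hs.
      replace (A (p + m1 - n)%nat - A p + 2 * PI) with (A (p + m1 - n)%nat + 2 * PI - A p) in Hs by ring.
      pose proof (Hmono (p + m1 - n)%nat (p + m2 - n)%nat ltac:(lia)).
      pose proof (Hb p (p + m1 - n)%nat ltac:(lia) ltac:(lia)).
      apply (sin_order (A (p + m1 - n)%nat + 2 * PI - A p)); lra.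
Qed.

Lemma comb_pos (t : nat -> R) n d : t 0%nat = 0 -> sumR n t = 0 ->
  (forall m1 m2, (1 <= m1)%nat -> (m1 < m2)%nat -> (m2 <= n - 1)%nat -> t m1 <= 0 -> t m2 < 0) ->
  (2 <= d <= n - 1)%nat -> 0 < sumR d t.
Proof.
  intros H0 Hs HQ Hd.
  destruct (classic (exists m, (1 <= m <= d - 1)%nat /\ t m <= 0)) as [[m1 [Hm1 Ht1]]|Hno].
  - assert (Hsplit : sumR n t = sumR d t + sumR (n - d) (fun i => t (d + i)%nat)).
    { rewrite <- sumR_split. f_equal. lia. }
    assert (sumR (n - d) (fun i => t (d + i)%nat) < 0).
    { apply sumR_neg; [lia|]. intros i Hi. apply (HQ m1); auto; lia. }
    lra.
  - assert (Hsplit : sumR d t = sumR 1 t + sumR (d - 1) (fun i => t (1 + i)%nat)).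
    { rewrite <- sumR_split. f_equal. lia. }
    simpl in Hsplit. rewrite Hsplit, H0.
    assert (0 < sumR (d - 1) (fun i => t (S i))).
    { apply sumR_pos; [lia|]. intros i Hi. destruct (Rlt_dec 0 (t (S i))); auto. exfalso. apply Hno.
      exists (S i). split; [lia|lra]. }
    lra.
Qed.

Lemma tele n P u a d :
  cross u (vsub (vtx n P (a + d)) (vtx n P a)) = sumR d (fun m => cross u (E n P (a + m)%nat)).
Proof.
  induction d.
  - simpl. rewrite Nat.add_0_r, vsub_self, cross_0. auto.
  - simpl sumR. rewrite <- IHd. rewrite Nat.add_succ_r. unfold E, cross, vsub; cbn [fst snd]. ring.
Qed.

Lemma CP_of_chain n P s k : (3 <= n)%nat -> (forall i, E n P i <> (0,0)) -> (s = 1 \/ s = -1) ->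
  (forall j, (j + 1 < n)%nat -> s * argP n P (k + j) < s * argP n P (k + S j)) -> CP n P s.
Proof.
  intros Hn Hnz Hs Hch. split; auto. intros i j H1 H2.
  set (A := fun q => s * argP n P (k + q)%nat).
  assert (Hper : forall q, A (q + n)%nat = A q).
  { intro q. unfold A. f_equal. apply argP_cong; [lia|].
    replace (k + (q + n))%nat with ((k + q) + 1 * n)%nat by lia. apply Nat.Div0.mod_add. }
  assert (Hmono : forall q1 q2, (q1 < q2 < n)%nat -> A q1 < A q2).
  { intros q1 q2 Hq. induction q2; [lia|].
    destruct (Nat.eq_dec q1 q2).
    - subst. apply Hch. lia.
    - pose proof (IHq2 ltac:(lia)). pose proof (Hch q2 ltac:(lia)). unfold A in *. lra. }
  assert (Hrng : forall q, 0 <= argP n P q < 2 * PI).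
  { intro q. rewrite argP_E. apply (arg_spec _ (Hnz q)). }
  assert (Hb : forall q q', (q < n)%nat -> (q' < n)%nat -> A q - A q' < 2 * PI).
  { intros q q' _ _. unfold A. pose proof (Hrng (k+q)%nat). pose proof (Hrng (k+q')%nat).
    destruct Hs; subst s; lra. }
  destruct (exists_offset n k i ltac:(lia)) as [p [Hp Ep]].
  destruct (exists_offset n i j ltac:(lia)) as [d [Hd Ed]].
  assert (d <> 0%nat) by (intro; subst; rewrite Nat.add_0_r in Ed; auto).
  assert (d <> 1%nat) by (intro; subst; rewrite Nat.add_1_r in Ed; auto).
  rewrite (E_cong n P i (k + p)) by (auto; lia).
  rewrite (vtx_cong n P i (k + p)) by (auto; lia).
  rewrite (vtx_cong n P j (k + p + d)).
  2: lia.
  2: { rewrite <- Ed. apply mod_addc; auto; lia. }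
  rewrite tele, <- sumR_scale.
  apply (comb_pos _ n d).
  - rewrite Nat.add_0_r, cross_self. ring.
  - rewrite sumR_scale, <- tele. rewrite vtx_add_n by lia. rewrite vsub_self, cross_0. ring.
  - assert (Ht : forall m, s * cross (E n P (k + p)) (E n P (k + p + m)%nat)
                  = vnorm (E n P (k + p)) * vnorm (E n P (k + p + m)%nat) * sin (A (p + m)%nat - A p)).
    { intro m. rewrite cross_sin by auto. unfold A. rewrite <- !argP_E.
      replace (k + (p + m))%nat with (k + p + m)%nat by lia.
      destruct Hs; subst s.
      - replace (1 * argP n P (k + p + m) - 1 * argP n P (k + p)) with (argP n P (k + p + m) - argP n P (k + p)) by ring. ring.
      - replace (-1 * argP n P (k + p + m) - -1 * argP n P (k + p)) with (- (argP n P (k + p + m) - argP n P (k + p))) by ring.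
        rewrite sin_neg. ring. }
    intros m1 m2 Hm1 Hm12 Hm2 Ht1. rewrite Ht in *.
    pose proof (vnorm_pos _ (Hnz (k + p)%nat)). pose proof (vnorm_pos _ (Hnz (k + p + m1)%nat)).
    pose proof (vnorm_pos _ (Hnz (k + p + m2)%nat)).
    assert (sin (A (p + m1)%nat - A p) <= 0).
    { destruct (Rle_dec (sin (A (p + m1)%nat - A p)) 0); auto. exfalso.
      assert (0 < vnorm (E n P (k + p)) * vnorm (E n P (k + p + m1)%nat)) by (apply Rmult_lt_0_compat; auto).
      assert (0 < vnorm (E n P (k + p)) * vnorm (E n P (k + p + m1)%nat) * sin (A (p + m1)%nat - A p))
        by (apply Rmult_lt_0_compat; lra). lra. }
    pose proof (Qlem A n p m1 m2 Hper Hmono Hb Hp Hm1 Hm12 Hm2 H6).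
    assert (0 < vnorm (E n P (k + p)) * vnorm (E n P (k + p + m2)%nat)) by (apply Rmult_lt_0_compat; auto).
    nra.
  - lia.
Qed.

Lemma CP_of_csm n P : (3 <= n)%nat -> c_strictly_monotone n P -> exists s, CP n P s.
Proof.
  intros Hn [LO [k [Hk Hch]]].
  assert (Hnz : forall i, E n P i <> (0,0)).
  { intros i HE. rewrite (E_cong n P i (i mod n)) in HE by (try lia; rewrite Nat.Div0.mod_mod; auto).
    apply (LO (i mod n)); [apply Nat.mod_upper_bound; lia|].
    unfold E, vsub in HE. injection HE as h1 h2.
    destruct (vtx n P (i mod n)), (vtx n P (S (i mod n))); simpl in *. f_equal; lra. }
  assert (Cv : forall j, (j + 1 < n)%nat ->
     argP n P ((k + j) mod n) = argP n P (k + j) /\ argP n P ((k + j + 1) mod n) = argP n P (k + S j)).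
  { intros j Hj. split; apply argP_cong; try lia; rewrite Nat.Div0.mod_mod; f_equal; lia. }
  destruct Hch as [Hinc|Hdec].
  - exists 1. apply (CP_of_chain n P 1 k Hn Hnz (or_introl eq_refl)).
    intros j Hj. destruct (Cv j Hj) as [e1 e2]. pose proof (Hinc j Hj). rewrite e1, e2 in H. lra.
  - exists (-1). apply (CP_of_chain n P (-1) k Hn Hnz (or_intror eq_refl)).
    intros j Hj. destruct (Cv j Hj) as [e1 e2]. pose proof (Hdec j Hj). rewrite e1, e2 in H. lra.
Qed.

Theorem theorem1p12 (n : nat) (P : nat -> point) (hn : (3 <= n)%nat) :
  strictly_convex n P <-> c_strictly_monotone n P.
Proof.
  split.
  - intro Hsc. destruct (CP_of_sc n P hn Hsc) as [s HCP]. exact (csm_of_CP n P s hn HCP).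
  - intro Hc. destruct (CP_of_csm n P hn Hc) as [s HCP]. exact (sc_of_CP n P s hn HCP).
Qed.
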